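(* Let $W\in[0,1]^{k\times k}$ and consider the collaborative learning problem with strategy space $\mathbb{R}_+^k$, linear utilities $u_i({\boldsymbol\theta})=\sum_jW_{ij}\theta_j$ and thresholds $\mu_i$. If $W_{ij}<W_{ii}$ for all $i\ne j$, then every stable equilibrium is envy-free.
   Context: ${\boldsymbol\theta}$ is feasible if $u_i({\boldsymbol\theta})\ge\mu_i$ for all $i$. A feasible ${\boldsymbol\theta}$ is a stable equilibrium if for no $i$ is there $0\le\theta_i'<\theta_i$ with $u_i(\theta_i',{\boldsymbol\theta}_{-i})\ge\mu_i$ (${\boldsymbol\theta}$ with $i$-th entry replaced). A feasible ${\boldsymbol\theta}$ is envy-free if there are no $i,j$ with $\theta_j<\theta_i$ and $u_i({\boldsymbol\theta}^{(i,j)})\ge\mu_i$, where ${\boldsymbol\theta}^{(i,j)}$ is ${\boldsymbol\theta}$ with entries $i$ and $j$ swapped. *)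

(* Defs.v *)
From mathcomp Require Import all_boot all_order all_algebra.
Set Implicit Arguments. Unset Strict Implicit. Unset Printing Implicit Defensive.
Import Order.TTheory GRing.Theory Num.Theory.
Local Open Scope ring_scope.

Section Collab.
Variables (R : realFieldType) (k : nat).

Definition nonneg_profile (theta : 'I_k -> R) : Prop := forall i, 0 <= theta i.

Definition lin_util (W : 'M[R]_k) (i : 'I_k) (theta : 'I_k -> R) : R :=
  \sum_(j < k) W i j * theta j.

Definition replace (theta : 'I_k -> R) (i : 'I_k) (t : R) : 'I_k -> R :=
  fun l => if l == i then t else theta l.

Definition swap (theta : 'I_k -> R) (i j : 'I_k) : 'I_k -> R :=
  fun l => if l == i then theta j else if l == j then theta i else theta l.

Definition feasible (W : 'M[R]_k) (mu : 'I_k -> R) (theta : 'I_k -> R) : Prop :=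
  nonneg_profile theta /\ forall i, mu i <= lin_util W i theta.

Definition stable_equilibrium (W : 'M[R]_k) (mu : 'I_k -> R) (theta : 'I_k -> R) : Prop :=
  feasible W mu theta /\
  ~ (exists i (t : R), 0 <= t /\ t < theta i /\ mu i <= lin_util W i (replace theta i t)).

Definition envy_free (W : 'M[R]_k) (mu : 'I_k -> R) (theta : 'I_k -> R) : Prop :=
  feasible W mu theta /\
  ~ (exists i j, theta j < theta i /\ mu i <= lin_util W i (swap theta i j)).

End Collab.

(* Main.v *)
Require Import Defs.
From mathcomp Require Import all_boot all_order all_algebra.
From mathcomp Require Import ring lra.
Import Order.TTheory GRing.Theory Num.Theory.
Local Open Scope ring_scope.

Lemma util_replace (R : realFieldType) (k : nat) (W : 'M[R]_k) i theta t :
  lin_util W i (replace theta i t) = lin_util W i theta + W i i * (t - theta i).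
Proof.
rewrite /lin_util (bigD1 i) //= [in RHS](bigD1 i) //= /replace eqxx.
rewrite (eq_bigr (fun j => W i j * theta j)); last by move=> j /negbTE ->.
ring.
Qed.

Lemma util_swap (R : realFieldType) (k : nat) (W : 'M[R]_k) i j theta :
  i != j ->
  lin_util W i (swap theta i j) =
  lin_util W i theta + W i i * (theta j - theta i) + W i j * (theta i - theta j).
Proof.
move=> ij.
rewrite /lin_util (bigD1 i) //= [in RHS](bigD1 i) //=.
rewrite (bigD1 j) /=; last by rewrite eq_sym.
rewrite [in RHS](bigD1 j) /=; last by rewrite eq_sym.
rewrite /swap eqxx (negbTE (_ : j != i)); last by rewrite eq_sym.
rewrite eqxx.
rewrite (eq_bigr (fun l => W i l * theta l)); last first.
  by move=> l /andP [/negbTE -> /negbTE ->].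
ring.
Qed.

Theorem theorem7 (R : realFieldType) (k : nat) (W : 'M[R]_k) (mu : 'I_k -> R) :
  (forall i j, 0 <= W i j <= 1) ->
  (forall i j, i != j -> W i j < W i i) ->
  forall theta : 'I_k -> R,
    stable_equilibrium W mu theta -> envy_free W mu theta.
Proof.
move=> W01 Wdiag theta [feas nost]; split => //.
move=> [i [j [lt hmu]]].
have ij : i != j by apply/eqP => E; move: lt; rewrite E ltxx.
have Wii := Wdiag i j ij.
have /andP [Wij0 _] := W01 i j.
have Wpos : 0 < W i i by apply: le_lt_trans Wii.
have nnj : 0 <= theta j by case: feas => nn _; exact: nn.
apply: nost; exists i, (theta i - (W i i - W i j) / W i i * (theta i - theta j)).
set d := (W i i - W i j) / W i i.
have d0 : 0 < d by rewrite /d divr_gt0 // subr_gt0.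
have d1 : d <= 1.
  by rewrite /d ler_pdivrMr // mul1r lerBlDr lerDl.
have hd : W i i * d = W i i - W i j by rewrite /d mulrC divfK // gt_eqF.
split; [|split].
- have : d * (theta i - theta j) <= theta i - theta j.
    by rewrite ler_piMl // subr_ge0 ltW.
  lra.
- rewrite ltrBlDr ltrDl; apply: mulr_gt0 => //; by rewrite subr_gt0.
- rewrite util_replace; move: hmu; rewrite util_swap //.
  have -> : W i i * (theta i - d * (theta i - theta j) - theta i)
          = - (W i i * d) * (theta i - theta j) by ring.
  rewrite hd. move=> h. apply: (le_trans h). rewrite le_eqVlt; apply/orP; left; apply/eqP; ring.
Qed.
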